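(* Let $a=a_1\cdots a_n$ be a signed permutation on $[n]$. Let $b=b_0b_1\cdots b_{2n+1}$ be the sequence on $\{-(n+1),\ldots,-1,0,1,\ldots,n\}$ given by $b_0=0$, $b_{2i-1}=-a_i$, $b_{2i}=a_i$ for $1\le i\le n$, and $b_{2n+1}=-(n+1)$. Let $\theta_1=(b_0,b_1)(b_2,b_3)\cdots(b_{2n},b_{2n+1})$ and $\theta_2=(0,-1)(1,-2)\cdots(n,-n-1)$, permutations of $\{-(n+1),\ldots,n\}$. Then $$d_r(a)\ \ge\ \frac{2n+2-C(\theta_1\theta_2)}{2}.$$
   Context: Permutations are multiplied as composition of maps, $(\sigma\tau)(x)=\sigma(\tau(x))$; $C(\pi)$ is the number of cycles of $\pi$, fixed points included. A signed permutation on $[n]$ is a sequence $a_1\cdots a_n$ with $a_k\in\{\pm1,\ldots,\pm n\}$ such that $|a_1|,\ldots,|a_n|$ is a permutation of $[n]$. A reversal $\varrho_{i,j}$ ($1\le i\le j\le n$) changes $a$ into $a_1\cdots a_{i-1}(-a_j)(-a_{j-1})\cdots(-a_i)a_{j+1}\cdots a_n$. The reversal distance $d_r(a)$ is the minimum number of reversals needed to transform $a$ into $12\cdots n$. *)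

(* Defs.v *)
From mathcomp Require Import all_boot all_order all_algebra all_fingroup.
Set Implicit Arguments. Unset Strict Implicit. Unset Printing Implicit Defensive.
Import GRing.Theory Num.Theory.
Local Open Scope ring_scope.

(* A signed permutation on [n] is a sequence a_1 ... a_n of nonzero integers
   (entries stored as a seq int, a_k = nth 0 a (k-1)) such that |a_1|,...,|a_n|
   is a permutation of 1..n. *)
Definition signed_perm (n : nat) (a : seq int) : Prop :=
  size a = n /\ perm_eq (map absz a) (iota 1 n).

Definition reversal (i j : nat) (a : seq int) : seq int :=
  take i.-1 a ++ map (fun x => - x) (rev (drop i.-1 (take j a))) ++ drop j a.

Definition valid_reversal (n : nat) (r : nat * nat) : bool :=
  (1 <= r.1)%N && (r.1 <= r.2)%N && (r.2 <= n)%N.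

Definition id_signed (n : nat) : seq int := [seq (k%:Z) | k <- iota 1 n].

Definition sorts_in (n : nat) (a : seq int) (k : nat) : Prop :=
  exists rs : seq (nat * nat),
    [/\ size rs = k, all (valid_reversal n) rs &
        foldl (fun s r => reversal r.1 r.2 s) a rs = id_signed n].

Definition bseq (n : nat) (a : seq int) (m : nat) : int :=
  if m == 0%N then 0
  else if m == (n.*2.+1)%N then - (n.+1)%:Z
  else if odd m then - nth 0 a m./2
  else nth 0 a m./2.-1.

(* The ground set {-(n+1), ..., n} is encoded as 'I_(2n+2) via x |-> x + n + 1. *)
Definition enc (n : nat) (x : int) : 'I_(n.*2.+2) := inord (absz (x + (n.+1)%:Z)).

Definition theta1 (n : nat) (a : seq int) : {perm 'I_(n.*2.+2)} :=
  (\prod_(k < n.+1) tperm (enc n (bseq n a k.*2)) (enc n (bseq n a k.*2.+1)))%g.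

Definition theta2 (n : nat) : {perm 'I_(n.*2.+2)} :=
  (\prod_(k < n.+1) tperm (enc n (k%:Z)) (enc n (- (k.+1)%:Z)))%g.

(* number of cycles of a permutation, fixed points included *)
Definition ncycles (T : finType) (s : {perm T}) : nat := #|porbits s|.

(* composition of maps as in the paper: (compose s t) x = s (t x).
   In MathComp, (t * s)%g x = s (t x). *)
Definition compose (T : finType) (s t : {perm T}) : {perm T} := (t * s)%g.

(* Main.v *)
Require Import Defs.
From mathcomp Require Import zify lra.
From mathcomp Require Import all_boot all_order all_algebra all_fingroup.
Import Defs.
Import GRing.Theory Num.Theory.


Definition fln (z : nat) : nat := if z %% 2 == 1 then z.-1 else z.+1.
Definition ofn n (f : nat -> nat) (x : 'I_(n.*2.+2)) : 'I_(n.*2.+2) := inord (f x).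

Lemma ofnE n (f : nat -> nat) (x : 'I_(n.*2.+2)) : f x < n.*2.+2 -> val (ofn n f x) = f x.
Proof. by move=> h; rewrite /ofn /= inordK. Qed.

Lemma ofn_inj n (f : nat -> nat) : (forall z, z < n.*2.+2 -> f z < n.*2.+2 /\ f (f z) = z) ->
  injective (ofn n f).
Proof.
move=> H x y /(congr1 val). have [hx1 hx2] := H x (ltn_ord x).
have [hy1 hy2] := H y (ltn_ord y).
rewrite !ofnE // => e; apply: val_inj => /=; by rewrite -hx2 -hy2 e.
Qed.

Lemma fln_ok n z : z < n.*2.+2 -> fln z < n.*2.+2 /\ fln (fln z) = z.
Proof. rewrite /fln => h; case: ifP => h1; case: ifP => h2; lia. Qed.

Definition theta0 n : {perm 'I_(n.*2.+2)} := perm (@ofn_inj n fln (fln_ok n)).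

Lemma prod0 n M : M <= n.+1 -> forall x : 'I_(n.*2.+2),
  (\prod_(k < M) tperm (inord k.*2 : 'I_(n.*2.+2)) (inord k.*2.+1))%g x
  = if x < M.*2 then ofn n fln x else x.
Proof.
elim: M => [|M IH] hM x; first by rewrite big_ord0 perm1.
rewrite big_ord_recr permM /= IH; last by lia.
have h1 : M.*2 < n.*2.+2 by lia.
have h2 : M.*2.+1 < n.*2.+2 by lia.
have [hf1 hf2] := fln_ok n x (ltn_ord x).
case: ifP => hx.
- rewrite tpermD.
  + case: ifP => //; lia.
  + apply/eqP => /(congr1 val); rewrite /= ofnE ?inordK //; move: hx; rewrite /fln; case: ifP; lia.
  + apply/eqP => /(congr1 val); rewrite /= ofnE ?inordK //; move: hx; rewrite /fln; case: ifP; lia.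
- case: tpermP => [->|->|/eqP n1 /eqP n2].
  + rewrite inordK // ifT; last lia.
    apply: val_inj; rewrite /ofn /= (inordK h1) /fln; case: ifP => ?; rewrite inordK; lia.
  + rewrite inordK // ifT; last lia.
    apply: val_inj; rewrite /ofn /= (inordK h2) /fln; case: ifP => ?; rewrite inordK; lia.
  + have e1 : (x : nat) <> M.*2 by move=> e; move/eqP: n1; apply; apply: val_inj; rewrite /= inordK ?e.
    have e2 : (x : nat) <> M.*2.+1 by move=> e; move/eqP: n2; apply; apply: val_inj; rewrite /= inordK ?e.
    case: ifP => // ?; exfalso; lia.
Qed.

Lemma theta0E n : (\prod_(k < n.+1) tperm (inord k.*2 : 'I_(n.*2.+2)) (inord k.*2.+1))%g = theta0 n.
Proof. apply/permP => x; rewrite prod0 // permE; case: ifP => //; have := ltn_ord x; lia. Qed.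

Lemma theta0_inv n : (theta0 n * theta0 n = 1)%g.
Proof.
apply/permP => x; rewrite permM perm1 !permE; apply: val_inj.
have [hf1 hf2] := fln_ok n x (ltn_ord x).
rewrite /= ofnE ofnE ?hf2 // ofnE //.
Qed.

Lemma bseq_0 n a : bseq n a 0 = 0%R.
Proof. by []. Qed.
Lemma bseq_last n a : bseq n a (n.*2.+1) = (- (n.+1)%:Z)%R.
Proof. by rewrite /bseq eqxx. Qed.
Lemma bseq_odd n a p : p < n -> bseq n a (p.*2.+1) = (- nth 0%R a p)%R.
Proof.
move=> hp; rewrite /bseq /=; case: ifP => [/eqP|_]; first lia.
by rewrite odd_double /= uphalf_double.
Qed.
Lemma bseq_even n a p : p < n -> bseq n a (p.*2.+2) = nth 0%R a p.
Proof.
move=> hp; rewrite /bseq /=; case: ifP => [/eqP|_]; first lia.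
by rewrite odd_double /= doubleK.
Qed.

Lemma pos_spec n m : m < n.*2.+2 -> [\/ m = 0, m = n.*2.+1 |
  exists2 p, p < n & m = p.*2.+1 \/ m = p.*2.+2].
Proof.
move=> hm; case: (posnP m) => [->|m0]; first by constructor 1.
case: (eqVneq m n.*2.+1) => [->|mn]; first by constructor 2.
constructor 3; exists ((m.-1) %/ 2); first lia.
lia.
Qed.

Lemma sp_abs n a p : signed_perm n a -> p < n ->
  (1 <= absz (nth 0%R a p) <= n)%N.
Proof.
case=> hs hp lt; have : absz (nth 0%R a p) \in iota 1 n.
  have := @mem_nth _ 0%N (map absz a) p; rewrite size_map hs (nth_map 0%R) ?hs //.
  by rewrite (perm_mem hp); apply.
by rewrite mem_iota; lia.
Qed.

Lemma sp_inj n a p q : signed_perm n a -> p < n -> q < n ->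
  absz (nth 0%R a p) = absz (nth 0%R a q) -> p = q.
Proof.
case=> hs hp lp lq e.
have hu : uniq (map absz a) by rewrite (perm_uniq hp) iota_uniq.
apply/eqP; rewrite -(nth_uniq 0%N _ _ hu) ?size_map ?hs //.
by rewrite !(nth_map 0%R) ?hs // e.
Qed.

Arguments sp_abs {n a p}.
Arguments sp_inj {n a p q}.

Lemma bseq_cases n a m : m < n.*2.+2 ->
  [\/ m = 0 /\ bseq n a m = 0%R, m = n.*2.+1 /\ bseq n a m = (- (n.+1)%:Z)%R |
   exists p, p < n /\ ((m = p.*2.+1 /\ bseq n a m = (- nth 0%R a p)%R) \/
                      (m = p.*2.+2 /\ bseq n a m = nth 0%R a p))].
Proof.
case/pos_spec => [->|->|[p hp [->|->]]].
- by constructor 1.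
- by constructor 2; rewrite bseq_last.
- by constructor 3; exists p; split => //; left; rewrite bseq_odd.
- by constructor 3; exists p; split => //; right; rewrite bseq_even.
Qed.

Lemma bseq_range n a m : signed_perm n a -> m < n.*2.+2 ->
  (0 <= bseq n a m + (n.+1)%:Z)%R /\ (absz (bseq n a m + (n.+1)%:Z)%R < n.*2.+2)%N.
Proof.
move=> H /(bseq_cases n a) [[_ ->]|[_ ->]|[p [hp [[_ ->]|[_ ->]]]]];
  try have ? := sp_abs H hp; split; lia.
Qed.

Lemma bseq_inj n a m1 m2 : signed_perm n a -> m1 < n.*2.+2 -> m2 < n.*2.+2 ->
  bseq n a m1 = bseq n a m2 -> m1 = m2.
Proof.
move=> H /(bseq_cases n a) c1 /(bseq_cases n a) c2.
case: c1 => [[-> ->]|[-> ->]|[p [hp [[-> ->]|[-> ->]]]]];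
case: c2 => [[-> ->]|[-> ->]|[q [hq [[-> ->]|[-> ->]]]]] => e //;
  try have ? := sp_abs H hp; try have ? := sp_abs H hq; try lia;
  have epq : p = q by apply: (sp_inj H hp hq); lia.
all: subst; lia.
Qed.

Arguments bseq_range {n a m}.
Arguments bseq_inj {n a m1 m2}.

Definition Bf n a (x : 'I_(n.*2.+2)) : 'I_(n.*2.+2) := enc n (bseq n a x).

Lemma BfE n a (x : 'I_(n.*2.+2)) : signed_perm n a ->
  val (Bf n a x) = absz (bseq n a x + (n.+1)%:Z)%R.
Proof. move=> H; rewrite /Bf /enc /= inordK //; by case: (bseq_range H (ltn_ord x)). Qed.

Lemma Bf_inj n a : signed_perm n a -> injective (Bf n a).
Proof.
move=> H x y /(congr1 val); rewrite !BfE //.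
have [h1 _] := bseq_range H (ltn_ord x); have [h2 _] := bseq_range H (ltn_ord y).
move=> e; apply: val_inj; apply: (bseq_inj H (ltn_ord x) (ltn_ord y)); lia.
Qed.

Lemma theta1E n a (H : signed_perm n a) :
  theta1 n a = (theta0 n ^ perm (Bf_inj n a H))%g.
Proof.
rewrite -theta0E (big_morph (fun s => s ^ perm (Bf_inj n a H))%g (fun x y => conjMg x y _) (conj1g _)).
rewrite /theta1; apply: eq_bigr => k _; rewrite tpermJ !permE /Bf /= !inordK //; have := ltn_ord k; lia.
Qed.

Definition phin (i j z : nat) : nat :=
  if (i.*2.-1 <= z <= j.*2) then i.*2 + j.*2 - 1 - z else z.
Definition tn (x y z : nat) : nat := if z == x then y else if z == y then x else z.

Variant phin_spec i j z : nat -> Prop :=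
 | PhIn of (i.*2.-1 <= z <= j.*2) : phin_spec i j z (i.*2 + j.*2 - 1 - z)
 | PhOut of ~~ (i.*2.-1 <= z <= j.*2) : phin_spec i j z z.
Lemma phinP i j z : phin_spec i j z (phin i j z).
Proof. rewrite /phin; case: ifP => h; [exact: PhIn | by apply: PhOut; rewrite h]. Qed.

Variant fln_spec z : nat -> Prop :=
 | FlOdd of z %% 2 = 1 : fln_spec z z.-1
 | FlEven of z %% 2 = 0 : fln_spec z z.+1.
Lemma flnP z : fln_spec z (fln z).
Proof. rewrite /fln; case: ifP => h; [apply: FlOdd | apply: FlEven]; lia. Qed.

Variant tn_spec x y z : nat -> Prop :=
 | TnX of z = x : tn_spec x y z y
 | TnY of z = y & z <> x : tn_spec x y z x
 | TnZ of z <> x & z <> y : tn_spec x y z z.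
Lemma tnP x y z : tn_spec x y z (tn x y z).
Proof.
rewrite /tn; case: eqP => h1; first exact: TnX.
case: eqP => h2; [exact: TnY | exact: TnZ].
Qed.

Lemma phin_eq i j z : ((i.*2.-1 <= z <= j.*2) /\ phin i j z = i.*2 + j.*2 - 1 - z)
  \/ (~~ (i.*2.-1 <= z <= j.*2) /\ phin i j z = z).
Proof. by case: phinP => h; [left|right]. Qed.
Lemma fln_eq z : (z %% 2 = 1 /\ fln z = z.-1) \/ (z %% 2 = 0 /\ fln z = z.+1).
Proof. by case: flnP => h; [left|right]. Qed.
Lemma tn_eq x y z : (z = x /\ tn x y z = y) \/ (z = y /\ z <> x /\ tn x y z = x)
  \/ (z <> x /\ z <> y /\ tn x y z = z).
Proof. by case: tnP => *; [left|right;left|right;right]. Qed.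

Lemma key_nat' n i j z u v w y t r : 1 <= i -> i <= j -> j <= n -> z < n.*2.+2 ->
  phin_spec i j z u -> fln_spec u v -> phin_spec i j v w -> fln_spec z y ->
  tn_spec (i.*2.-1) (j.*2) y t -> tn_spec (i.*2.-2) (j.*2.+1) t r -> w = r.
Proof.
move=> h1 h2 h3 hz.
intros H1 H2 H3 H4 H5 H6; destruct H1; destruct H2; destruct H3; destruct H4; destruct H5; destruct H6; lia.
Qed.

Lemma key_nat n i j z : 1 <= i -> i <= j -> j <= n -> z < n.*2.+2 ->
  phin i j (fln (phin i j z)) =
  tn (i.*2.-2) (j.*2.+1) (tn (i.*2.-1) (j.*2) (fln z)).
Proof.
move=> h1 h2 h3 hz; exact: (@key_nat' n i j z _ _ _ _ _ _ h1 h2 h3 hz (phinP i j z) (flnP (phin i j z)) (phinP i j (fln (phin i j z))) (flnP z) (tnP (i.*2.-1) (j.*2) (fln z)) (tnP (i.*2.-2) (j.*2.+1) (tn (i.*2.-1) (j.*2) (fln z)))).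
Qed.

Lemma nth_reversal n i j (a : seq int) p : size a = n -> 1 <= i -> i <= j -> j <= n -> p < n ->
  nth 0%R (reversal i j a) p =
  if (i.-1 <= p < j) then (- nth 0%R a (i + j - 2 - p))%R else nth 0%R a p.
Proof.
move=> hs h1 h2 h3 hp; rewrite /reversal nth_cat size_take hs.
have -> : (if i.-1 < n then i.-1 else n) = i.-1 by case: ifP; lia.
case: ifP => c1.
  rewrite nth_take //; case: ifP => //; lia.
rewrite nth_cat size_map size_rev size_drop size_take hs.
have -> : (if j < n then j else n) = j by case: ifP; lia.
case: ifP => c2.
  rewrite (nth_map 0%R); last by rewrite size_rev size_drop size_take hs; case: ifP; lia.
  rewrite nth_rev; last by rewrite size_drop size_take hs; case: ifP; lia.
  rewrite size_drop size_take hs nth_drop nth_take; last first.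
    case: ifP; lia.
  have -> : (if j < n then j else n) = j by case: ifP; lia.
  rewrite ifT; last lia.
  congr (- nth _ _ _)%R; lia.
rewrite nth_drop ifF; last lia.
congr nth; lia.
Qed.

Lemma sp_reversal n i j a : signed_perm n a -> 1 <= i -> i <= j -> j <= n ->
  signed_perm n (reversal i j a).
Proof.
case=> hs hp h1 h2 h3; split.
  rewrite /reversal !size_cat size_map size_rev !size_drop !size_take_min hs; lia.
apply: perm_trans hp.
rewrite /reversal !map_cat -map_comp.
have -> : [seq (absz \o (fun x : int => (- x)%R)) i | i <- rev (drop i.-1 (take j a))]
        = rev (drop i.-1 (take j (map absz a))).
  rewrite map_rev map_drop map_take; do 3 congr (_ _); apply: eq_map => x /=; exact: abszN.
rewrite -map_take -map_drop; set s := map absz a.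
rewrite -[X in perm_eq _ X](cat_take_drop j s) -[X in perm_eq _ (X ++ _)](cat_take_drop i.-1 (take j s)).
rewrite take_takel; last lia.
by rewrite -catA /s !map_take !map_drop map_take perm_cat2l perm_cat2r perm_rev.
Qed.

Lemma bseq_rev n i j a m : signed_perm n a -> 1 <= i -> i <= j -> j <= n -> m < n.*2.+2 ->
  bseq n (reversal i j a) m = bseq n a (phin i j m).
Proof.
move=> H h1 h2 h3 hm; have hs : size a = n by case: H.
case: (bseq_cases n (reversal i j a) m hm) => [[-> ->]|[-> ->]|[p [hp [[-> ->]|[-> ->]]]]].
- by rewrite /phin ifF //; lia.
- by rewrite /phin ifF ?bseq_last //; lia.
- rewrite (@nth_reversal n i j a p hs) //; rewrite /phin; case: ifP => c1; case: ifP => c2; try lia.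
  + have -> : i.*2 + j.*2 - 1 - p.*2.+1 = (i + j - 2 - p).*2.+2 by lia.
    by rewrite bseq_even ?opprK //; lia.
  + by rewrite bseq_odd.
- rewrite (@nth_reversal n i j a p hs) //; rewrite /phin; case: ifP => c1; case: ifP => c2; try lia.
  + have -> : i.*2 + j.*2 - 1 - p.*2.+2 = (i + j - 2 - p).*2.+1 by lia.
    by rewrite bseq_odd //; lia.
  + by rewrite bseq_even.
Qed.

Lemma phin_ok n i j z : 1 <= i -> i <= j -> j <= n -> z < n.*2.+2 ->
  phin i j z < n.*2.+2 /\ phin i j (phin i j z) = z.
Proof. move=> h1 h2 h3 hz; rewrite /phin; case: ifP => c1; case: ifP => c2; lia. Qed.

Lemma tpermV' k (x y z : 'I_k) : val (tperm x y z) = tn x y z.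
Proof.
rewrite /tn; case: tpermP => [->|->|nx ny]; rewrite ?eqxx //.
- by case: eqP => [->|].
- rewrite ifF; last by apply/eqP => /val_inj.
  by rewrite ifF //; apply/eqP => /val_inj.
Qed.

Lemma ofnE' n (f : nat -> nat) (x : 'I_(n.*2.+2)) :
  val (ofn n f x) = if f x < n.*2.+2 then f x else 0.
Proof. by rewrite /ofn /inord /insubd /odflt /oapp; case: insubP => [u -> ->|/negbTE ->]. Qed.

Lemma step n i j a (H : signed_perm n a) : 1 <= i -> i <= j -> j <= n ->
  exists x y u v : 'I_(n.*2.+2),
    theta1 n (reversal i j a) = (theta1 n a * (tperm x y * tperm u v))%g.
Proof.
move=> h1 h2 h3.
have H' := @sp_reversal n i j a H h1 h2 h3.
have Pinj := @ofn_inj n (phin i j) (fun z => @phin_ok n i j z h1 h2 h3).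
set P := perm Pinj.
set B := perm (Bf_inj n a H).
have eB : perm (Bf_inj n _ H') = (P * B)%g.
  apply/permP => x; rewrite permM !permE; apply: val_inj.
  have [r1 _] := @phin_ok n i j x h1 h2 h3 (ltn_ord x).
  by rewrite !BfE // (@bseq_rev n i j a _ H) // ofnE.
rewrite !theta1E eB conjgM.
have e0 : (theta0 n ^ P = theta0 n * (tperm (inord (i.*2.-1)) (inord (j.*2))
             * tperm (inord (i.*2.-2)) (inord (j.*2.+1))))%g.
  apply/permP => z.
  have Pz : P (P z) = z.
    apply: val_inj; have [r1 r2] := @phin_ok n i j z h1 h2 h3 (ltn_ord z).
    by rewrite !permE ofnE; rewrite ofnE // r2...
  rewrite -{1}Pz permJ !permM; apply: val_inj.
  have [r1 r2] := @phin_ok n i j z h1 h2 h3 (ltn_ord z).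
  have [f1 f2] := fln_ok n (phin i j z) r1.
  have [g1 g2] := fln_ok n z (ltn_ord z).
  have [s1 _] := @phin_ok n i j (fln (phin i j z)) h1 h2 h3 f1.
  rewrite !tpermV' /P /theta0 !permE !ofnE' r1 /= f1 /= s1 /= g1 /= !inordK; try lia.
  exact: (@key_nat n).
by rewrite e0 conjMg conjMg !tpermJ; eexists; eexists; eexists; eexists.
Qed.

Lemma porbits_tperm_ge (T : finType) (s : {perm T}) x y :
  #|porbits s| <= #|porbits (tperm x y * s)%g| + 1.
Proof.
have := porbits_mul_tperm s x y.
case: (boolP (x \in porbit s y)) => h /=.
- by case: (x != y) => /=; lia.
- have xy : x != y by apply: contraNneq h => ->; exact: porbit_id.
  rewrite xy /=; lia.
Qed.

Lemma two_tperm (T : finType) (s : {perm T}) x y u v :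
  #|porbits s| <= #|porbits (s * (tperm x y * tperm u v))%g| + 2.
Proof.
rewrite -(porbitsV (s * _)) !invMg !tpermV -mulgA.
have := @porbits_tperm_ge _ (tperm x y * s^-1)%g u v.
have := @porbits_tperm_ge _ s^-1 x y; rewrite porbitsV; move=> A B; apply: (leq_trans A); rewrite (_ : 2 = 1 + 1) // addnA leq_add2r; exact: B.
Qed.

Lemma two_tperm' (T : finType) (s : {perm T}) x y u v :
  #|porbits (s * (tperm x y * tperm u v))%g| <= #|porbits s| + 2.
Proof.
have := @two_tperm _ (s * (tperm x y * tperm u v))%g u v x y.
have -> : (s * (tperm x y * tperm u v) * (tperm u v * tperm x y) = s)%g.
  by rewrite -!mulgA (mulgA (tperm u v)) tperm2 mul1g tperm2 mulg1.
by [].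
Qed.

Definition fcyc n a := #|porbits (theta2 n * theta1 n a)%g|.

Lemma fcyc_step n a r : signed_perm n a -> valid_reversal n r ->
  fcyc n (reversal r.1 r.2 a) <= fcyc n a + 2.
Proof.
move=> H /andP [/andP [h1 h2] h3].
have [x [y [u [v E]]]] := @step n r.1 r.2 a H h1 h2 h3.
rewrite /fcyc E mulgA; exact: two_tperm'.
Qed.

Lemma sp_id n : signed_perm n (id_signed n).
Proof.
split; first by rewrite size_map size_iota.
by rewrite /id_signed -map_comp (eq_map (g:=id)) ?map_id.
Qed.

Lemma nth_id n p : p < n -> nth 0%R (id_signed n) p = Posz (p.+1).
Proof. by move=> hp; rewrite /id_signed (nth_map 0%N) ?size_iota // nth_iota // add1n. Qed.

Lemma theta1_id n : theta1 n (id_signed n) = theta2 n.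
Proof.
apply: eq_bigr => k _; have hk := ltn_ord k; congr tperm; congr enc.
- case: (nat_of_ord k) hk => [|k'] hk; first by [].
  by rewrite doubleS bseq_even ?nth_id.
- have [e|lt] := eqVneq (nat_of_ord k) n.
    by rewrite e bseq_last.
  by rewrite bseq_odd ?nth_id //; lia.
Qed.

Lemma porbits1 (T : finType) : #|porbits (1 : {perm T})%g| = #|T|.
Proof.
have P1 : forall x, porbit (1 : {perm T})%g x = [set x].
  move=> x; apply/setP => y; rewrite inE; apply/porbitP/eqP => [[i ->]|->].
    by rewrite expg1n perm1.
  by exists 0; rewrite expg0 perm1.
rewrite /porbits card_imset // => x y; rewrite !P1; exact: set1_inj.
Qed.

Lemma fcyc_id n : fcyc n (id_signed n) = n.*2.+2.
Proof.
rewrite /fcyc -theta1_id (theta1E n _ (sp_id n)) -conjMg theta0_inv conj1g.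
by rewrite porbits1 card_ord.
Qed.

Lemma fold_ind n rs : forall a, signed_perm n a -> all (valid_reversal n) rs ->
  fcyc n (foldl (fun s r => reversal r.1 r.2 s) a rs) <= fcyc n a + (size rs).*2.
Proof.
elim: rs => [|r rs IH] a H /=; first by rewrite addn0.
move/andP => [hr hrs].
have H' : signed_perm n (reversal r.1 r.2 a).
  by case/andP: hr => /andP [h1 h2] h3; apply: sp_reversal.
apply: leq_trans (IH _ H' hrs) _.
have := @fcyc_step n a r H hr; lia.
Qed.

Local Open Scope ring_scope.
Theorem proposition1 (n : nat) (a : seq int) :
  signed_perm n a ->
  forall k : nat, sorts_in n a k ->
    (((n.*2.+2)%:R - (ncycles (compose (theta1 n a) (theta2 n)))%:R) / 2 : rat)
      <= k%:R.
Proof.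
move=> H k [rs [hs hall hfold]].
have := @fold_ind n rs a H hall; rewrite hfold fcyc_id hs => h.
have -> : ncycles (compose (theta1 n a) (theta2 n)) = fcyc n a by [].
have h' : ((n.*2.+2)%:R <= (fcyc n a)%:R + k%:R * 2%:R :> rat).
  by rewrite -natrM -natrD ler_nat muln2.
rewrite ler_pdivrMr //; lra.
Qed.
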